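(* Fix $M<\infty$, $\kappa\in(0,1/2)$, and let $\mathcal{G}_1,\mathcal{G}_2,\dots$ be a (finite or countable) sequence of classes of allocations. Suppose the penalties satisfy: there exist positive constants $c_0,c_1$ such that for all $n,k$ and $\epsilon>0$, $\sup_{P\in\mathcal{P}(M,\kappa)}P^n\big(W_n(\hat G_{n,k})-W(\hat G_{n,k})-C_n(k)>\epsilon\big)\le c_1e^{-2c_0n\epsilon^2}$. Then there exists a positive constant $\Delta$, not depending on $n$, such that for every $n$, every $P\in\mathcal{P}(M,\kappa)$ and every $\epsilon>0$, $$P^n\big(R_n(\hat G_n)-W(\hat G_n)>\epsilon\big)\le\Delta e^{-2c_0n\epsilon^2},$$ where $R_n(\hat G_n):=\max_kR_{n,k}(\hat G_{n,k})$.
   Context: $P$ is the distribution of $(Y,D,X)$ with $Y\in\mathbb{R}$, $D\in\{0,1\}$, $X\in\mathcal{X}\subseteq\mathbb{R}^{d_x}$; data i.i.d. from $P$. $e(x)=E_P[D\mid X=x]$ (known). $\mathcal{P}(M,\kappa)$: distributions with support of $Y$ in $[-M/2,M/2]$ and $e(x)\in[\kappa,1-\kappa]$ for all $x$. Welfare $W(G)=E_P[(\frac{YD}{e(X)}-\frac{Y(1-D)}{1-e(X)})\mathbf{1}\{X\in G\}]$. $\tau_i=\frac{Y_iD_i}{e(X_i)}-\frac{Y_i(1-D_i)}{1-e(X_i)}$, $W_n(G)=\frac1n\sum_i\tau_i\mathbf{1}\{X_i\in G\}$, $\hat G_{n,k}\in\arg\max_{G\in\mathcal{G}_k}W_n(G)$.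 With data-dependent penalties $C_n(k)$, $R_{n,k}(G)=W_n(G)-C_n(k)-\sqrt{k/n}$; the PWM rule is $\hat G_n=\hat G_{n,\hat k}$ with $\hat k\in\arg\max_kR_{n,k}(\hat G_{n,k})$. Maximizers assumed to exist. *)

(* Defs.v *)
From HB Require Import structures.
From mathcomp Require Import all_boot all_order all_algebra.
From mathcomp Require Import all_classical all_reals all_analysis.
Set Implicit Arguments. Unset Strict Implicit. Unset Printing Implicit Defensive.
Import Order.TTheory GRing.Theory Num.Theory.
Local Open Scope classical_set_scope.
Local Open Scope ring_scope.

(* One observation (Y, D, X) with Y in R, D in {0,1} (as bool), X in R^dx. *)
Definition Obs (R : realType) (dx : nat) : Type := (R * bool * dx.-tuple R)%type.

Section Defs.
Variables (R : realType) (dx : nat).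

Definition obsY (z : Obs R dx) : R := z.1.1.
Definition obsD (z : Obs R dx) : R := (z.1.2)%:R.
Definition obsX (z : Obs R dx) : dx.-tuple R := z.2.

Definition tau (e : dx.-tuple R -> R) (z : Obs R dx) : R :=
  obsY z * obsD z / e (obsX z) - obsY z * (1 - obsD z) / (1 - e (obsX z)).

Definition welfare (P : probability (Obs R dx) R) (e : dx.-tuple R -> R)
    (G : set (dx.-tuple R)) : R :=
  Rintegral P setT (fun z => tau e z * \1_G (obsX z)).

Definition emp_welfare (e : dx.-tuple R -> R) (n : nat) (s : n.-tuple (Obs R dx))
    (G : set (dx.-tuple R)) : R :=
  n%:R^-1 * \sum_(i < n) tau e (tnth s i) * \1_G (obsX (tnth s i)).

(* e is (a version of) the propensity score E_P[D | X = .] *)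
Definition is_propensity (P : probability (Obs R dx) R) (e : dx.-tuple R -> R) : Prop :=
  measurable_fun setT e /\
  forall A : set (dx.-tuple R), measurable A ->
    (\int[P]_(z in obsX @^-1` A) (obsD z)%:E =
     \int[P]_(z in obsX @^-1` A) (e (obsX z))%:E)%E.

Definition in_class (M kappa : R) (P : probability (Obs R dx) R)
    (e : dx.-tuple R -> R) : Prop :=
  P [set z | - (M / 2) <= obsY z <= M / 2] = 1%E /\
  is_propensity P e /\
  (forall x, kappa <= e x <= 1 - kappa).

Definition is_product_prob (P : probability (Obs R dx) R) (n : nat)
    (Pn : probability (n.-tuple (Obs R dx)) R) : Prop :=
  forall A : 'I_n -> set (Obs R dx), (forall i, measurable (A i)) ->
    Pn [set s | forall i, A i (tnth s i)] = (\prod_(i < n) P (A i))%E.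

End Defs.

(* index set of the classes: {1, ..., K} (finite) or {1, 2, ...} (countable) *)
Definition kset (K : option nat) : set nat :=
  [set k | (1 <= k)%N /\ (if K is Some m then (k <= m)%N else True)].

(* Main.v *)
Require Import Defs.
From HB Require Import structures.
From mathcomp Require Import all_boot all_order all_algebra.
From mathcomp Require Import all_classical all_reals all_analysis.
From mathcomp Require Import lra.
Import Order.TTheory GRing.Theory Num.Theory.
Local Open Scope classical_set_scope.
Local Open Scope ring_scope.

Theorem lemmaA2 (R : realType) (dx : nat) (M kappa : R)
  (K : option nat) (Gk : nat -> set (set (dx.-tuple R)))
  (Ghat : (dx.-tuple R -> R) -> forall n : nat, nat -> n.-tuple (Obs R dx) -> set (dx.-tuple R))
  (C : (dx.-tuple R -> R) -> forall n : nat, nat -> n.-tuple (Obs R dx) -> R)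
  (khat : (dx.-tuple R -> R) -> forall n : nat, n.-tuple (Obs R dx) -> nat)
  (c0 c1 : R) :
  0 < kappa -> kappa < 1 / 2 ->
  (* G^_{n,k} maximizes W_n over G_k *)
  (forall e n k s, kset K k ->
     Gk k (Ghat e n k s) /\
     forall G, Gk k G -> emp_welfare e s G <= emp_welfare e s (Ghat e n k s)) ->
  (* k^ maximizes R_{n,k}(G^_{n,k}) = W_n(G^_{n,k}) - C_n(k) - sqrt(k/n) over k *)
  (forall e n s, kset K (khat e n s) /\
     forall k, kset K k ->
       emp_welfare e s (Ghat e n k s) - C e n k s - Num.sqrt (k%:R / n%:R)
       <= emp_welfare e s (Ghat e n (khat e n s) s) - C e n (khat e n s) s
          - Num.sqrt ((khat e n s)%:R / n%:R)) ->
  (* measurability of the statistics involved (implicit in the paper) *)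
  (forall P e, in_class M kappa P e -> forall n k, kset K k ->
     measurable_fun setT (fun s : n.-tuple (Obs R dx) =>
       emp_welfare e s (Ghat e n k s) - welfare P e (Ghat e n k s) - C e n k s) /\
     measurable [set s : n.-tuple (Obs R dx) | khat e n s = k]) ->
  0 < c0 -> 0 < c1 ->
  (* penalty condition *)
  (forall (n : nat) (k : nat) (eps : R), (1 <= n)%N -> kset K k -> 0 < eps ->
     forall P e, in_class M kappa P e ->
     forall Pn : probability (n.-tuple (Obs R dx)) R, is_product_prob P Pn ->
       (Pn [set s | (emp_welfare e s (Ghat e n k s) - welfare P e (Ghat e n k s)
                    - C e n k s > eps)%R]
        <= (c1 * expR (- (2 * c0 * n%:R * eps ^+ 2)))%:E)%E) ->
  exists Delta : R, 0 < Delta /\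
    forall (n : nat) (P : probability (Obs R dx) R) (e : dx.-tuple R -> R),
      (1 <= n)%N -> in_class M kappa P e ->
      forall Pn : probability (n.-tuple (Obs R dx)) R, is_product_prob P Pn ->
      forall eps : R, 0 < eps ->
        (Pn [set s | ((emp_welfare e s (Ghat e n (khat e n s) s) - C e n (khat e n s) s
                      - Num.sqrt ((khat e n s)%:R / n%:R))
                     - welfare P e (Ghat e n (khat e n s) s) > eps)%R]
         <= (Delta * expR (- (2 * c0 * n%:R * eps ^+ 2)))%:E)%E.
Proof.
move=> kap0 kap2 Hmax Hk Hmeas c00 c10 Hpen.
set q := expR (- (2 * c0)).
have q1 : q < 1 by rewrite /q expR_lt1 oppr_lt0 mulr_gt0.
have q0 : 0 < q by exact: expR_gt0.
have q1' : 0 < 1 - q by rewrite subr_gt0.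
exists (c1 / (1 - q)); split; first by rewrite divr_gt0.
move=> n P e n1 HP Pn HPn eps eps0.
set E := expR (- (2 * c0 * n%:R * eps ^+ 2)).
have E0 : 0 < E by exact: expR_gt0.
pose f k (s : n.-tuple (Obs R dx)) :=
  emp_welfare e s (Ghat e n k s) - welfare P e (Ghat e n k s) - C e n k s.
pose F k := [set s : n.-tuple (Obs R dx) | kset K k /\ khat e n s = k /\
   eps + Num.sqrt (k%:R / n%:R) < f k s].
have FE : [set s | ((emp_welfare e s (Ghat e n (khat e n s) s) - C e n (khat e n s) s
                      - Num.sqrt ((khat e n s)%:R / n%:R))
                     - welfare P e (Ghat e n (khat e n s) s) > eps)%R]
     = \bigcup_k F k.
  apply/seteqP; split => s /=.
    move=> H; exists (khat e n s) => //; split; first by case: (Hk e n s).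
    split => //; rewrite /f; move: H; lra.
  by move=> [k _ [_ [<- H]]]; rewrite /f in H; lra.
have Fm : forall k, measurable (F k).
  move=> k; case: (pselect (kset K k)) => kK; last first.
    by rewrite (_ : F k = set0) //; apply/seteqP; split => s //= [].
  have [mf mk] := Hmeas P e HP n k kK.
  have := mf measurableT _ (measurable_itv `](eps + Num.sqrt (k%:R / n%:R)), +oo[).
  rewrite setTI => m1.
  rewrite (_ : F k = [set s | khat e n s = k] `&` (f k @^-1` `](eps + Num.sqrt (k%:R / n%:R)), +oo[)).
    exact: measurableI.
  apply/seteqP; split => s /=.
    by move=> [_ [-> H]]; split => //; rewrite in_itv /= andbT.
  by move=> [H1 H2]; split => //; split => //; move: H2; rewrite /= in_itv /= andbT.
rewrite FE.
have Um : measurable (\bigcup_k F k) by apply: bigcup_measurable => k _; exact: Fm.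
have := @measure_sigma_subadditive _ _ _ Pn (\bigcup_k F k) F Fm Um (@subset_refl _ _).
move=> /le_trans; apply.
apply: (@le_trans _ _ (\sum_(k <oo) ((c1 * E) * q ^+ k)%:E)%E).
  apply: lee_nneseries => [i _ _|k _]; first exact: measure_ge0.
  case: (pselect (kset K k)) => kK; last first.
    rewrite (_ : F k = set0); last by apply/seteqP; split => s //= [].
    by rewrite measure0 lee_fin mulr_ge0 ?exprn_ge0 ?ltW // mulr_gt0.
  apply: (@le_trans _ _ (Pn [set s | eps + Num.sqrt (k%:R / n%:R) < f k s])).
    apply: le_measure; rewrite ?inE; first exact: Fm.
      have [mf _] := Hmeas P e HP n k kK.
      have := mf measurableT _ (measurable_itv `](eps + Num.sqrt (k%:R / n%:R)), +oo[).
      rewrite setTI; suff -> : [set s | eps + Num.sqrt (k%:R / n%:R) < f k s] =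
         f k @^-1` `](eps + Num.sqrt (k%:R / n%:R)), +oo[ by [].
      by apply/seteqP; split => s /=; rewrite in_itv /= andbT.
    by move=> s [_ []].
  have ep : 0 < eps + Num.sqrt (k%:R / n%:R) by rewrite ltr_wpDr.
  apply: le_trans (Hpen n k _ n1 kK ep P e HP Pn HPn) _.
  rewrite lee_fin.
rewrite -[c1 * E * _]mulrA (ler_pM2l c10) /E /q -expRM_natr -expRD ler_expR.
  have n0 : 0 < n%:R :> R by rewrite ltr0n.
  have sq : Num.sqrt (k%:R / n%:R) ^+ 2 = k%:R / n%:R :> R.
    by rewrite sqr_sqrtr // divr_ge0.
  have hk : n%:R * (k%:R / n%:R) = k%:R :> R.
    by rewrite mulrC -mulrA mulVf ?mulr1 // gt_eqF.
  have s0 : 0 <= Num.sqrt (k%:R / n%:R) :> R by exact: sqrtr_ge0.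
  set t := Num.sqrt (k%:R / n%:R) in sq s0 *.
  have : n%:R * (eps ^+ 2) + k%:R <= n%:R * ((eps + t) ^+ 2).
    rewrite -hk -sq -mulrDr ler_pM2l // sqrrD lerD2r lerDl.
    by rewrite mulrn_wge0 // mulr_ge0 // ltW.
  move=> H.
  have H2 := ler_wpM2l (ltW c00) H.
  move: H2; set a := (eps + t) ^+ 2; set b := eps ^+ 2; set nn := n%:R; set kk := k%:R.
  move=> H2; clear -H2; nra.
have H : (fun m => \sum_(0 <= k < m) ((c1 * E) * q ^+ k)%:E) @ \oo -->
         ((c1 * E) * (1 - q)^-1)%:E.
  apply: cvg_EFin; first by apply: nearW => m; rewrite sumEFin.
  rewrite (_ : _ \o _ = series (geometric (c1 * E) q)).
    by apply: cvg_geometric_series; rewrite ger0_norm // ltW.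
  by apply/funext => m /=; rewrite sumEFin /= /series /=.
rewrite (cvg_lim _ H) // lee_fin.
by rewrite mulrAC.
Qed.
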